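(* Let $\mu\in P_2(\mathbb{R}^d)$ be a probabilistic frame which is not tight, and let $\delta:=\lambda_d(\mu)-\lambda_1(\mu)>0$. Then for every tight probabilistic frame $\nu\in P_2(\mathbb{R}^d)$, $$W_2(\mu,\nu)\ge\frac{\delta}{4\,(M_2(\mu)+M_2(\nu))}.$$
   Context: For $p\ge1$, $P_p(\mathbb{R}^d)$ denotes the set of Borel probability measures $\mu$ on $\mathbb{R}^d$ with $M_p^p(\mu):=\int\|x\|^p\,d\mu(x)<\infty$, equipped with the $p$-Wasserstein distance $W_p(\mu,\nu)=\big(\inf_{\gamma\in\Gamma(\mu,\nu)}\iint\|x-y\|^p\,d\gamma(x,y)\big)^{1/p}$, where $\Gamma(\mu,\nu)$ is the set of couplings of $\mu$ and $\nu$. A probability measure $\mu$ on $\mathbb{R}^d$ is a probabilistic frame if there exist $0<A\le B<\infty$ with $A\|x\|^2\le\int\langle x,y\rangle^2\,d\mu(y)\le B\|x\|^2$ for all $x$; it is tight if this holds with $A=B$. For $\mu\in P_2(\mathbb{R}^d)$, $S_\mu=\int yy^\top d\mu(y)$ is the frame operator and $\lambda_1(\mu)\le\dots\le\lambda_d(\mu)$ denote its eigenvalues. *)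

(* Defs.v *)
(* R^d is modelled as d.-tuple R with the product
   (= Borel) sigma-algebra provided by MathComp-Analysis. *)
From HB Require Import structures.
From mathcomp Require Import all_boot all_order all_algebra.
From mathcomp Require Import all_classical all_reals all_analysis.
Set Implicit Arguments. Unset Strict Implicit. Unset Printing Implicit Defensive.
Import Order.TTheory GRing.Theory Num.Theory.
Local Open Scope classical_set_scope.
Local Open Scope ring_scope.

Notation vec R d := (d.-tuple R).

Section defs.
Variables (R : realType) (d : nat).

Definition dotv (x y : vec R d) : R := \sum_(i < d) tnth x i * tnth y i.
Definition sqnorm (x : vec R d) : R := \sum_(i < d) (tnth x i) ^+ 2.
Definition sqdist (x y : vec R d) : R := \sum_(i < d) (tnth x i - tnth y i) ^+ 2.

Definition M2sq (mu : probability (vec R d) R) : \bar R :=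
  (\int[mu]_x (sqnorm x)%:E)%E.
Definition inP2 (mu : probability (vec R d) R) : Prop := (M2sq mu < +oo)%E.
Definition M2 (mu : probability (vec R d) R) : R := Num.sqrt (fine (M2sq mu)).

Definition prob_frame (mu : probability (vec R d) R) : Prop :=
  exists A B : R, 0 < A /\ A <= B /\
    forall x : vec R d,
      ((A * sqnorm x)%:E <= \int[mu]_y ((dotv x y) ^+ 2)%:E)%E /\
      (\int[mu]_y ((dotv x y) ^+ 2)%:E <= (B * sqnorm x)%:E)%E.

Definition tight_frame (mu : probability (vec R d) R) : Prop :=
  exists A : R, 0 < A /\
    forall x : vec R d,
      ((A * sqnorm x)%:E <= \int[mu]_y ((dotv x y) ^+ 2)%:E)%E /\
      (\int[mu]_y ((dotv x y) ^+ 2)%:E <= (A * sqnorm x)%:E)%E.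

Definition frame_op (mu : probability (vec R d) R) : 'M[R]_d :=
  \matrix_(i, j) Rintegral mu setT (fun y : vec R d => tnth y i * tnth y j).

Definition lambda_min (mu : probability (vec R d) R) : R :=
  inf [set a : R | eigenvalue (frame_op mu) a].
Definition lambda_max (mu : probability (vec R d) R) : R :=
  sup [set a : R | eigenvalue (frame_op mu) a].

Definition coupling (mu nu : probability (vec R d) R)
    (g : probability (vec R d * vec R d)%type R) : Prop :=
  forall A : set (vec R d), measurable A ->
    g (A `*` setT) = mu A /\ g (setT `*` A) = nu A.

Definition W2 (mu nu : probability (vec R d) R) : R :=
  Num.sqrt (fine (ereal_inf
    [set (\int[g]_z (sqdist z.1 z.2)%:E)%E
      | g in [set g : probability (vec R d * vec R d)%type R | coupling mu nu g]])).

End defs.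

(* Main.v *)
Require Import Defs.
From HB Require Import structures.
From mathcomp Require Import all_boot all_order all_algebra.
From mathcomp Require Import all_classical all_reals all_analysis.
From mathcomp Require Import complex measurable_realfun.
Import Order.TTheory GRing.Theory Num.Theory.
Local Open Scope classical_set_scope.
Local Open Scope ring_scope.
From mathcomp Require Import ring lra.
Section sp.
Context {R : realType}.
Local Open Scope complex_scope.
Lemma real_C (c : R[i]) : c \is Num.real -> c = (complex.Re c)%:C.
Proof.
case: c => a b /=; rewrite realE.
rewrite !complex.lecE /= => /orP[/andP[/eqP-> _]|/andP[/eqP <- _]] //.
Qed.
Lemma realC_real (x : R) : (x%:C : R[i]) \is Num.real.
Proof. by rewrite realE !complex.lecE /= eqxx /= le_total. Qed.
Lemma sym_spectral n (S : 'M[R]_n.+1) : S^T = S ->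
  (exists c : R, S = c%:M) \/ (exists a b : R, a < b /\ eigenvalue S a /\ eigenvalue S b).
Proof.
move=> Ssym.
pose SC := map_mx (real_complex R) S.
have herm : SC \is hermsymmx.
  apply/is_hermitianmxP; apply/matrixP => i j; rewrite !mxE expr0.
  rewrite mul1r; have -> : S j i = S i j by rewrite -{1}Ssym mxE.
  by rewrite conj_Creal // realC_real.
have nrm := hermitian_normalmx herm.
have /orthomx_spectralP Seq := nrm.
have Dreal := hermitian_spectral_diag_real herm.
set P := spectralmx SC in Seq; set D := spectral_diag SC in Seq Dreal.
have Pu : P \in unitmx by apply: spectral_unit.
have eigC k : eigenvalue SC (D 0 k).
  apply/eigenvalueP; exists (delta_mx 0 k *m P).
    by rewrite {1}Seq !mulmxA mulmxK // -[delta_mx 0 k *m diag_mx D]rowE row_diag_mx -scalemxAl.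
  apply/negP => /eqP h; have := congr1 (mulmx^~ (invmx P)) h.
  rewrite mulmxK // mul0mx => /matrixP/(_ 0 k); rewrite !mxE !eqxx /=.
  by move/eqP; rewrite oner_eq0.
have eigR k : eigenvalue S (complex.Re (D 0 k)).
  rewrite -(eigenvalue_map (real_complex R)); have := eigC k.
  by rewrite {1}[D 0 k]real_C ?(mxOverP Dreal).
have [allEq|] := boolP [forall k, D 0 k == D 0 0].
  left; exists (complex.Re (D 0 0)).
  have SCe : SC = (D 0 0)%:M.
    rewrite Seq; have -> : diag_mx D = (D 0 0)%:M.
      by apply/matrixP => i j; rewrite !mxE (eqP (forallP allEq i)).
    by rewrite mul_mx_scalar -scalemxAl mulVmx // scalemx1.
  apply/matrixP => i j; move/matrixP: SCe => /(_ i j).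
  rewrite !mxE; case: (i == j); rewrite ?mulr1n ?mulr0n => /(congr1 (@complex.Re R)) //.
move/forallPn => [k /negP hk]; right.
have ne : complex.Re (D 0 k) != complex.Re (D 0 0).
  apply/negP => /eqP e; apply: hk; apply/eqP.
  by rewrite [D 0 k]real_C ?(mxOverP Dreal) // e -real_C ?(mxOverP Dreal).
case: (ltgtP (complex.Re (D 0 k)) (complex.Re (D 0 0))) ne => // h _.
  by exists (complex.Re (D 0 k)), (complex.Re (D 0 0)).
by exists (complex.Re (D 0 0)), (complex.Re (D 0 k)).
Qed.
End sp.
Section integ.
Context {R : realType} {d : nat}.
Local Notation V := (vec R d).

Lemma mtnth (i : 'I_d) : measurable_fun setT (fun y : V => tnth y i).
Proof. exact: measurable_tnth. Qed.

Lemma msqnorm : measurable_fun setT (@sqnorm R d).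
Proof.
rewrite /sqnorm; apply: measurable_sum => i.
by apply: measurable_funX; exact: mtnth.
Qed.

Lemma mdot (x : V) : measurable_fun setT (fun y => dotv x y).
Proof.
rewrite /dotv; apply: measurable_sum => i.
by apply: measurable_funM => //; exact: mtnth.
Qed.

Lemma sqnorm_ge0 (y : V) : 0 <= sqnorm y.
Proof. by apply: sumr_ge0 => i _; exact: sqr_ge0. Qed.

Lemma coord_le (y : V) k : tnth y k ^+ 2 <= sqnorm y.
Proof.
rewrite /sqnorm (bigD1 k) //= lerDl; apply: sumr_ge0 => i _; exact: sqr_ge0.
Qed.

Lemma prod_le (y : V) i j : `|tnth y i * tnth y j| <= sqnorm y.
Proof.
have hi := coord_le y i; have hj := coord_le y j.
rewrite normrM; set a := tnth y i in hi *; set b := tnth y j in hj *.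
have ha : `|a| ^+ 2 = a ^+ 2 by rewrite real_normK ?num_real.
have hb : `|b| ^+ 2 = b ^+ 2 by rewrite real_normK ?num_real.
have := normr_ge0 a; have := normr_ge0 b.
nra.
Qed.
Definition qf (S : 'M[R]_d) (x : V) := \sum_i \sum_j tnth x i * tnth x j * S i j.

Lemma sqnorm_int (mu : probability V R) : inP2 mu ->
  mu.-integrable setT (fun y => (sqnorm y)%:E).
Proof.
move=> h; apply/integrableP; split; first exact: measurableT_comp msqnorm.
under eq_integral => y _ do rewrite gee0_abs ?lee_fin ?sqnorm_ge0 //.
exact: h.
Qed.

Arguments sqnorm_int {mu}.
Lemma prod_int (mu : probability V R) i j : inP2 mu ->
  mu.-integrable setT (fun y => (tnth y i * tnth y j)%:E).
Proof.
move=> h; apply: (le_integrable measurableT _ _ (sqnorm_int h)).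
  apply: measurableT_comp => //; apply: measurable_funM; exact: mtnth.
move=> y _ /=; rewrite lee_fin (ger0_norm (sqnorm_ge0 y)); exact: prod_le.
Qed.

Arguments prod_int {mu}.
Lemma quad_int (mu : probability V R) (x : V) : inP2 mu ->
  (\int[mu]_y ((dotv x y) ^+ 2)%:E = (qf (frame_op mu) x)%:E)%E.
Proof.
move=> h.
have e y : ((dotv x y) ^+ 2)%:E = (\sum_i \sum_j (tnth x i * tnth x j)%:E * (tnth y i * tnth y j)%:E)%E.
  rewrite /dotv expr2 mulr_suml -sumEFin; apply: eq_bigr => i _.
  rewrite mulr_sumr -sumEFin; apply: eq_bigr => j _.
  by rewrite -EFinM; congr (_%:E); ring.
under eq_integral => y _ do rewrite e.
rewrite (integral_sum measurableT); last first.
  move=> i; apply: (integrable_sum measurableT) => j _.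
  apply: (integrableZl measurableT); exact: prod_int.
rewrite /qf -sumEFin; apply: eq_bigr => i _.
rewrite (integral_sum measurableT); last first.
  by move=> j; apply: (integrableZl measurableT); exact: prod_int.
rewrite -sumEFin; apply: eq_bigr => j _.
rewrite (integralZl measurableT); last exact: prod_int.
rewrite mxE /Rintegral [RHS]EFinM fineK //.
exact: (integrable_fin_num measurableT (prod_int i j h)).
Qed.

Lemma sqnorm0 (x : V) : sqnorm x = 0 -> forall i, tnth x i = 0.
Proof.
move=> h i; apply/eqP; rewrite -sqrf_eq0; apply/eqP/le_anti.
by rewrite sqr_ge0 andbT -h coord_le.
Qed.

Lemma cauchy_schwarz (x y : V) : dotv x y ^+ 2 <= sqnorm x * sqnorm y.
Proof.
have [x0|xpos] := eqVneq (sqnorm x) 0.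
  rewrite x0 mul0r /dotv big1 ?expr0n // => i _.
  by rewrite (@sqnorm0 x x0) mul0r.
have xp : 0 < sqnorm x by rewrite lt_def xpos sqnorm_ge0.
set s := dotv x y / sqnorm x.
have : 0 <= \sum_(i < d) (s * tnth x i - tnth y i) ^+ 2.
  by apply: sumr_ge0 => i _; exact: sqr_ge0.
have -> : \sum_(i < d) (s * tnth x i - tnth y i) ^+ 2 =
    s ^+ 2 * sqnorm x - 2 * s * dotv x y + sqnorm y.
  rewrite /sqnorm /dotv !mulr_sumr -sumrN -!big_split /=.
  by apply: eq_bigr => i _; ring.
have hs : s * sqnorm x = dotv x y by rewrite /s divfK.
move=> h.
have : 0 <= sqnorm x * (s ^+ 2 * sqnorm x - 2 * s * dotv x y + sqnorm y).
  exact: mulr_ge0 (ltW xp) h.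
have -> : sqnorm x * (s ^+ 2 * sqnorm x - 2 * s * dotv x y + sqnorm y) =
   (s * sqnorm x) ^+ 2 - 2 * (s * sqnorm x) * dotv x y + sqnorm x * sqnorm y.
  by ring.
rewrite hs; lra.
Qed.

Lemma eigen_vec (S : 'M[R]_d) a : eigenvalue S a ->
  exists v : V, 0 < sqnorm v /\ qf S v = a * sqnorm v.
Proof.
move/eigenvalueP => [w wS w0].
exists [tuple w 0 i | i < d]; split.
  rewrite lt_def sqnorm_ge0 andbT; apply/negP => /eqP /(@sqnorm0 _) h.
  apply/negP: w0; apply/negPn/eqP/matrixP => i j.
  by rewrite (ord1 i) mxE -(h j) tnth_mktuple.
rewrite /qf /sqnorm exchange_big mulr_sumr; apply: eq_bigr => j _.
move/matrixP: wS => /(_ 0 j); rewrite !mxE => e.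
rewrite !tnth_mktuple.
transitivity (w 0 j * \sum_i w 0 i * S i j).
  by rewrite mulr_sumr; apply: eq_bigr => i _; rewrite !tnth_mktuple; ring.
by rewrite e; ring.
Qed.

Lemma marg1 (mu nu : probability V R) (g : probability (V * V)%type R)
  (f : V -> R) : coupling mu nu g -> measurable_fun setT f -> (forall y, 0 <= f y) ->
  (\int[g]_z (f z.1)%:E = \int[mu]_y (f y)%:E)%E.
Proof.
move=> cpl mf f0.
rewrite (eq_measure_integral (pushforward g fst)); last first.
  move=> A mA _; rewrite /pushforward.
  rewrite /= -(cpl A mA).1; congr (g _).
  by apply/seteqP; split => -[a b] //=; move=> [].
rewrite ge0_integral_pushforward //.
all: first [ by rewrite preimage_setT | exact: measurableT_comp | by move=> y _; rewrite lee_fin | idtac ].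
Qed.

Lemma marg2 (mu nu : probability V R) (g : probability (V * V)%type R)
  (f : V -> R) : coupling mu nu g -> measurable_fun setT f -> (forall y, 0 <= f y) ->
  (\int[g]_z (f z.2)%:E = \int[nu]_y (f y)%:E)%E.
Proof.
move=> cpl mf f0.
rewrite (eq_measure_integral (pushforward g snd)); last first.
  move=> A mA _; rewrite /pushforward.
  rewrite /= -(cpl A mA).2; congr (g _).
  by apply/seteqP; split => -[a b] //=; move=> [].
rewrite ge0_integral_pushforward //.
all: first [ by rewrite preimage_setT | exact: measurableT_comp | by move=> y _; rewrite lee_fin | idtac ].
Qed.

Definition dv (z1 z2 : V) : V := [tuple tnth z1 i - tnth z2 i | i < d].

Lemma dot_dv (x z1 z2 : V) : dotv x (dv z1 z2) = dotv x z1 - dotv x z2.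
Proof.
rewrite /dotv -sumrB; apply: eq_bigr => i _; rewrite tnth_mktuple; ring.
Qed.

Lemma sqnorm_dv (z1 z2 : V) : sqnorm (dv z1 z2) = sqdist z1 z2.
Proof. by apply: eq_bigr => i _; rewrite tnth_mktuple. Qed.

Lemma sqdist_ge0 (z1 z2 : V) : 0 <= sqdist z1 z2.
Proof. rewrite -sqnorm_dv; exact: sqnorm_ge0. Qed.

Lemma sqdistC (z1 z2 : V) : sqdist z1 z2 = sqdist z2 z1.
Proof. by apply: eq_bigr => i _; rewrite -sqrrN opprB. Qed.

Lemma pw (x z1 z2 : V) t : 0 < t ->
  dotv x z1 ^+ 2 <= dotv x z2 ^+ 2 + (sqnorm x * (t / 2)) * sqdist z1 z2
     + (sqnorm x / t) * sqnorm z1 + (sqnorm x / t) * sqnorm z2.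
Proof.
move=> tp.
have H1 := cauchy_schwarz x (dv z1 z2).
rewrite dot_dv sqnorm_dv in H1.
have H2 := cauchy_schwarz x z1.
have H3 := cauchy_schwarz x z2.
move: (dotv x z1) (dotv x z2) (sqnorm x) (sqdist z1 z2) H1 H2 H3 => p q X D H1 H2 H3.
have [u ue] : {u : R | u = 1 / t} by exists (1 / t).
have tu : t * u = 1 by rewrite ue mulrC divfK ?gt_eqF.
have up : 0 < u by rewrite ue divr_gt0.
have -> : X / t = X * u by rewrite ue mulrA mulr1.
have step1 : p ^+ 2 - q ^+ 2 + u / 2 * (t * (p - q) - (p + q)) ^+ 2
    = t / 2 * (p - q) ^+ 2 + u / 2 * (p + q) ^+ 2.
  have -> : u / 2 * (t * (p - q) - (p + q)) ^+ 2 =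
    (t * u) / 2 * (t * (p - q) ^+ 2) - (t * u) * (p - q) * (p + q) + u / 2 * (p + q) ^+ 2.
    by field.
  by rewrite tu; field.
have s0 : 0 <= u / 2 * (t * (p - q) - (p + q)) ^+ 2.
  by apply: mulr_ge0; [apply: divr_ge0; [exact: ltW|] | exact: sqr_ge0].
have step2 : t / 2 * (p - q) ^+ 2 <= t / 2 * (X * D).
  by apply: ler_wpM2l => //; apply: divr_ge0 => //; exact: ltW.
have step3 : u / 2 * (p + q) ^+ 2 <= u * (X * sqnorm z1) + u * (X * sqnorm z2).
  have : (p + q) ^+ 2 <= 2 * (X * sqnorm z1) + 2 * (X * sqnorm z2).
    have := sqr_ge0 (p - q); nra.
  move=> h; have := ler_wpM2l (ltW up) h; nra.
nra.
Qed.

Lemma msqdist (p q : V * V -> V) : measurable_fun setT p -> measurable_fun setT q ->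
  measurable_fun setT (fun z => sqdist (p z) (q z)).
Proof.
move=> mp mq; rewrite /sqdist; apply: measurable_sum => i.
apply: measurable_funX; apply: measurable_funB.
- exact: measurableT_comp (mtnth i) mp.
- exact: measurableT_comp (mtnth i) mq.
Qed.

Lemma gbound (g : probability (V * V)%type R) (p q : V * V -> V)
  (mp : measurable_fun setT p) (mq : measurable_fun setT q) (x : V) t :
  0 < t ->
  (\int[g]_z ((dotv x (p z)) ^+ 2)%:E <= \int[g]_z ((dotv x (q z)) ^+ 2)%:E
     + (sqnorm x * (t / 2))%:E * \int[g]_z (sqdist (p z) (q z))%:E
     + (sqnorm x / t)%:E * \int[g]_z (sqnorm (p z))%:E
     + (sqnorm x / t)%:E * \int[g]_z (sqnorm (q z))%:E)%E.
Proof.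
move=> tp.
have c1 : 0 <= sqnorm x * (t / 2).
  by apply: mulr_ge0; [exact: sqnorm_ge0 | apply: divr_ge0; [exact: ltW|]].
have c2 : 0 <= sqnorm x / t by apply: divr_ge0; [exact: sqnorm_ge0 | exact: ltW].
have mdq : measurable_fun setT (fun z => ((dotv x (q z)) ^+ 2)%:E).
  by apply: measurableT_comp => //; apply: measurable_funX; exact: measurableT_comp (mdot x) mq.
have mdp : measurable_fun setT (fun z => ((dotv x (p z)) ^+ 2)%:E).
  by apply: measurableT_comp => //; apply: measurable_funX; exact: measurableT_comp (mdot x) mp.
have msd : measurable_fun setT (fun z => (sqdist (p z) (q z))%:E).
  by apply: measurableT_comp => //; exact: msqdist.
have msp : measurable_fun setT (fun z => (sqnorm (p z))%:E).
  by apply: measurableT_comp => //; exact: measurableT_comp msqnorm mp.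
have msq : measurable_fun setT (fun z => (sqnorm (q z))%:E).
  by apply: measurableT_comp => //; exact: measurableT_comp msqnorm mq.
apply: le_trans.
  apply: (@ge0_le_integral _ _ _ g setT measurableT _ (fun z => (
     ((dotv x (q z)) ^+ 2)%:E + ((sqnorm x * (t / 2))%:E * (sqdist (p z) (q z))%:E)
     + ((sqnorm x / t)%:E * (sqnorm (p z))%:E) + ((sqnorm x / t)%:E * (sqnorm (q z))%:E))%E)).
  - by move=> z _; rewrite lee_fin sqr_ge0.
  - exact: mdp.
  - apply: emeasurable_funD; last exact: measurable_funeM.
    apply: emeasurable_funD; last exact: measurable_funeM.
    apply: emeasurable_funD => //; exact: measurable_funeM.
  - by move=> z _; rewrite -!EFinM -!EFinD lee_fin; exact: pw.
have nn (z : V * V) : [/\ 0 <= dotv x (q z) ^+ 2, 0 <= sqnorm x * (t / 2) * sqdist (p z) (q z),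
   0 <= sqnorm x / t * sqnorm (p z) & 0 <= sqnorm x / t * sqnorm (q z)].
  split; [exact: sqr_ge0 | apply: mulr_ge0 => //; exact: sqdist_ge0
         | apply: mulr_ge0 => //; exact: sqnorm_ge0 | apply: mulr_ge0 => //; exact: sqnorm_ge0].
rewrite le_eqVlt; apply/orP; left; apply/eqP.
have nnt : forall z : V * V, (0 <= ((dotv x (q z)) ^+ 2)%:E + ((sqnorm x * (t / 2))%:E * (sqdist (p z) (q z))%:E)
     + ((sqnorm x / t)%:E * (sqnorm (p z))%:E))%E /\ (0 <= ((dotv x (q z)) ^+ 2)%:E + ((sqnorm x * (t / 2))%:E * (sqdist (p z) (q z))%:E))%E.
  by move=> z; rewrite -!EFinM -!EFinD !lee_fin; case: (nn z) => *; rewrite !addr_ge0.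
rewrite ge0_integralD //; last first.
- exact: measurable_funeM.
- by move=> z _; rewrite -EFinM lee_fin; case: (nn z).
- apply: emeasurable_funD; last exact: measurable_funeM.
  apply: emeasurable_funD => //; exact: measurable_funeM.
- by move=> z _; case: (nnt z).
rewrite ge0_integralD //; last first.
- exact: measurable_funeM.
- by move=> z _; rewrite -EFinM lee_fin; case: (nn z).
- apply: emeasurable_funD => //; exact: measurable_funeM.
- by move=> z _; case: (nnt z).
rewrite ge0_integralD //; last first.
- exact: measurable_funeM.
- by move=> z _; rewrite -EFinM lee_fin; case: (nn z).
- by move=> z _; rewrite lee_fin; case: (nn z).
rewrite ge0_integralZl_EFin //; last by move=> z _; rewrite lee_fin sqdist_ge0.
rewrite ge0_integralZl_EFin //; last by move=> z _; rewrite lee_fin sqnorm_ge0.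
rewrite ge0_integralZl_EFin //; last by move=> z _; rewrite lee_fin sqnorm_ge0.
Qed.

Lemma prod_cpl (mu nu : probability V R) : coupling mu nu (mu \x nu)%E.
Proof.
move=> A mA; split.
  have h := product_measure1E mu nu mA (measurableT : measurable [set: V]).
  transitivity ((mu \x nu)%E (A `*` [set: V])); first by [].
  by rewrite h -[RHS]mule1; congr (_ * _)%E; exact: probability_setT.
have h := product_measure1E mu nu (measurableT : measurable [set: V]) mA.
transitivity ((mu \x nu)%E ([set: V] `*` A)); first by [].
by rewrite h -[RHS]mul1e; congr (_ * _)%E; exact: probability_setT.
Qed.

Lemma sqdist_le (z1 z2 : V) : sqdist z1 z2 <= 2 * sqnorm z1 + 2 * sqnorm z2.
Proof.
rewrite /sqdist /sqnorm !mulr_sumr -big_split /=; apply: ler_sum => i _.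
have := sqr_ge0 (tnth z1 i + tnth z2 i); nra.
Qed.

Lemma W2_lb (mu nu : probability V R) (c : R) : 0 <= c -> inP2 mu -> inP2 nu ->
  (forall g, coupling mu nu g -> ((c ^+ 2)%:E <= \int[g]_z (sqdist z.1 z.2)%:E)%E) ->
  c <= W2 mu nu.
Proof.
move=> c0 hmu hnu H.
set S := [set (\int[g]_z (sqdist z.1 z.2)%:E)%E
      | g in [set g : probability (V * V)%type R | coupling mu nu g]].
have lb : ((c ^+ 2)%:E <= ereal_inf S)%E.
  by apply/ereal_infP => _ [g cg <-]; exact: H.
have ub : (ereal_inf S < +oo)%E.
  apply: (@le_lt_trans _ _ (\int[(mu \x nu)%E]_z (sqdist z.1 z.2)%:E)%E).
    by apply: ereal_inf_lbound; exists (mu \x nu)%E => //; exact: prod_cpl.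
  apply: (@le_lt_trans _ _ (\int[(mu \x nu)%E]_z ((2 * sqnorm z.1)%:E + (2 * sqnorm z.2)%:E))%E).
    apply: ge0_le_integral => //.
    - by move=> z _; rewrite lee_fin sqdist_ge0.
    - apply: measurableT_comp => //; exact: msqdist.
    - apply: emeasurable_funD; apply: measurableT_comp => //;
        apply: measurable_funM => //; exact: measurableT_comp msqnorm _.
    - by move=> z _; rewrite -EFinD lee_fin sqdist_le.
  rewrite ge0_integralD //; [|
    by move=> z _; rewrite lee_fin mulr_ge0 ?sqnorm_ge0 |
    apply: measurableT_comp => //; apply: measurable_funM => //; exact: measurableT_comp msqnorm _ |
    by move=> z _; rewrite lee_fin mulr_ge0 ?sqnorm_ge0 |
    apply: measurableT_comp => //; apply: measurable_funM => //; exact: measurableT_comp msqnorm _ ].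
  under eq_integral do rewrite EFinM.
  under [X in (_ + X)%E]eq_integral do rewrite EFinM.
  rewrite ge0_integralZl_EFin //; [| by move=> z _; rewrite lee_fin sqnorm_ge0 |
    exact: measurableT_comp (measurableT_comp msqnorm _)].
  rewrite ge0_integralZl_EFin //; [| by move=> z _; rewrite lee_fin sqnorm_ge0 |
    exact: measurableT_comp (measurableT_comp msqnorm _)].
  rewrite (marg1 _ _ _ _ (prod_cpl mu nu) msqnorm sqnorm_ge0).
  rewrite (marg2 _ _ _ _ (prod_cpl mu nu) msqnorm sqnorm_ge0).
  apply: lte_add_pinfty; apply: lte_mul_pinfty => //; first [exact: hmu | exact: hnu].
have fin : ereal_inf S = (fine (ereal_inf S))%:E.
  rewrite fineK // ge0_fin_numE ?ub //.
  by apply: le_trans lb; rewrite lee_fin sqr_ge0.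
rewrite /W2 -/S; rewrite fin lee_fin in lb.
apply: (@le_trans _ _ (Num.sqrt (c ^+ 2))); first by rewrite sqrtr_sqr ger0_norm.
by rewrite ler_sqrt //; apply: le_trans lb; exact: sqr_ge0.
Qed.

Lemma M2sq_ge0 (mu : probability V R) : (0 <= M2sq mu)%E.
Proof. by apply: integral_ge0 => y _; rewrite lee_fin sqnorm_ge0. Qed.

Lemma M2sqE (mu : probability V R) : inP2 mu -> M2sq mu = ((M2 mu) ^+ 2)%:E.
Proof.
move=> h; rewrite /M2 sqr_sqrtr ?fine_ge0 ?M2sq_ge0 // fineK //.
by rewrite ge0_fin_numE ?M2sq_ge0.
Qed.

Lemma M2_ge0 (mu : probability V R) : 0 <= M2 mu.
Proof. exact: sqrtr_ge0. Qed.

Lemma mdot2 (x : V) : measurable_fun setT (fun y : V => dotv x y ^+ 2).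
Proof. by apply: measurable_funX; exact: mdot. Qed.

Lemma eig_bounds (mu : probability V R) e : inP2 mu ->
  eigenvalue (frame_op mu) e -> 0 <= e /\ e <= (M2 mu) ^+ 2.
Proof.
move=> h /eigen_vec [v [vp qv]].
have hq := quad_int mu v h; rewrite qv in hq.
split.
  have : (0 <= (e * sqnorm v)%:E)%E.
    by rewrite -hq; apply: integral_ge0 => y _; rewrite lee_fin sqr_ge0.
  by rewrite lee_fin pmulr_lge0.
have : ((e * sqnorm v)%:E <= (sqnorm v * (M2 mu) ^+ 2)%:E)%E.
  rewrite -hq EFinM -M2sqE //.
  rewrite /M2sq -ge0_integralZl_EFin //; [| by move=> y _; rewrite lee_fin sqnorm_ge0 |
    exact: measurableT_comp msqnorm | exact: sqnorm_ge0].
  apply: ge0_le_integral => //.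
  - by move=> y _; rewrite lee_fin sqr_ge0.
  - exact: measurableT_comp (mdot2 v).
  - apply: measurable_funeM; exact: measurableT_comp msqnorm.
  - by move=> y _; rewrite -EFinM lee_fin cauchy_schwarz.
by rewrite lee_fin mulrC ler_pM2l.
Qed.

Lemma frame_sym (mu : probability V R) : (frame_op mu)^T = frame_op mu.
Proof.
apply/matrixP => i j; rewrite !mxE /Rintegral; congr fine.
by apply: eq_integral => y _; rewrite mulrC.
Qed.

Lemma qf_scalar c (x : V) : qf (c%:M) x = c * sqnorm x.
Proof.
rewrite /qf /sqnorm mulr_sumr; apply: eq_bigr => i _.
rewrite (bigD1 i) //= big1 => [|j /negbTE ji]; last by rewrite !mxE eq_sym ji mulr0n mulr0.
by rewrite !mxE eqxx mulr1n addr0; ring.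
Qed.

Lemma eig_near (mu nu : probability V R) (g : probability (V * V)%type R) A e t r :
  inP2 mu -> inP2 nu -> coupling mu nu g ->
  (forall x : V, \int[nu]_y ((dotv x y) ^+ 2)%:E = (A * sqnorm x)%:E)%E ->
  0 < t -> (\int[g]_z (sqdist z.1 z.2)%:E)%E = r%:E ->
  eigenvalue (frame_op mu) e ->
  `|e - A| <= t / 2 * r + ((M2 mu) ^+ 2 + (M2 nu) ^+ 2) / t.
Proof.
move=> hmu hnu cpl hnuA tp hr /eigen_vec [v [vp qv]].
have e1 : (\int[g]_z ((dotv v z.1) ^+ 2)%:E = (e * sqnorm v)%:E)%E.
  rewrite (marg1 mu nu g (fun y => dotv v y ^+ 2) cpl (mdot2 v)); last by move=> y; exact: sqr_ge0.
  by rewrite quad_int // qv.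
have e2 : (\int[g]_z ((dotv v z.2) ^+ 2)%:E = (A * sqnorm v)%:E)%E.
  rewrite (marg2 mu nu g (fun y => dotv v y ^+ 2) cpl (mdot2 v)); last by move=> y; exact: sqr_ge0.
  exact: hnuA.
have m1 : (\int[g]_z (sqnorm z.1)%:E = ((M2 mu) ^+ 2)%:E)%E.
  by rewrite (marg1 mu nu g _ cpl msqnorm sqnorm_ge0) -M2sqE.
have m2 : (\int[g]_z (sqnorm z.2)%:E = ((M2 nu) ^+ 2)%:E)%E.
  by rewrite (marg2 mu nu g _ cpl msqnorm sqnorm_ge0) -M2sqE.
have g1 := gbound g fst snd measurable_fst measurable_snd v t tp.
have g2 := gbound g snd fst measurable_snd measurable_fst v t tp.
rewrite e1 e2 hr m1 m2 -!EFinM -!EFinD lee_fin in g1.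
have sd : (\int[g]_z (sqdist z.2 z.1)%:E = r%:E)%E.
  by rewrite -hr; apply: eq_integral => z _; rewrite sqdistC.
rewrite e1 e2 sd m1 m2 -!EFinM -!EFinD lee_fin in g2.
set K := t / 2 * r + ((M2 mu) ^+ 2 + (M2 nu) ^+ 2) / t.
have hK : sqnorm v * (t / 2) * r + sqnorm v / t * M2 mu ^+ 2 + sqnorm v / t * M2 nu ^+ 2
   = K * sqnorm v by rewrite /K; field; rewrite gt_eqF.
rewrite ler_norml; apply/andP; split.
  rewrite -(ler_pM2r vp) mulNr mulrBl; move: g2 hK; lra.
rewrite -(ler_pM2r vp) mulrBl; move: g1 hK; lra.
Qed.
End integ.

Lemma two_eigs (R : realType) (d : nat) (mu : probability (vec R d) R) :
  inP2 mu -> prob_frame mu -> ~ tight_frame mu ->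
  exists a b, a < b /\ eigenvalue (frame_op mu) a /\ eigenvalue (frame_op mu) b.
Proof.
case: d mu => [|n] mu hmu [A0 [B0 [A0p [_ hfr]]]] nt.
  exfalso; apply: nt; exists 1; split => // x.
  have z : sqnorm x = 0 by rewrite /sqnorm big_ord0.
  have i0 : (\int[mu]_y ((dotv x y) ^+ 2)%:E = 0)%E.
    under eq_integral => y _ do rewrite /dotv big_ord0 expr0n /=.
    exact: integral0.
  by rewrite z i0 mulr0.
have [[c Sc]|[a [b h]]] := sym_spectral _ _ (frame_sym mu); last by exists a, b.
exfalso; apply: nt.
have q x : (\int[mu]_y ((dotv x y) ^+ 2)%:E = (c * sqnorm x)%:E)%E.
  by rewrite quad_int // Sc qf_scalar.
pose x1 : vec R n.+1 := [tuple 1 | i < n.+1].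
have s1 : 0 < sqnorm x1.
  apply: lt_le_trans (coord_le x1 ord0); by rewrite tnth_mktuple expr1n ltr01.
have cp : 0 < c.
  have := (hfr x1).1; rewrite q lee_fin ler_pM2r // => h.
  exact: lt_le_trans A0p h.
by exists c; split => // x; rewrite q; split.
Qed.

Arguments two_eigs {R d mu}.

Theorem mainTheorem2 (R : realType) (d : nat) (mu : probability (vec R d) R) :
  inP2 mu -> prob_frame mu -> ~ tight_frame mu ->
  0 < lambda_max mu - lambda_min mu /\
  forall nu : probability (vec R d) R,
    inP2 nu -> tight_frame nu ->
    (lambda_max mu - lambda_min mu) / (4 * (M2 mu + M2 nu)) <= W2 mu nu.
Proof.
move=> hmu hfr nt.
have [a [b [ab [Ea Eb]]]] := two_eigs hmu hfr nt.
set E := [set e : R | eigenvalue (frame_op mu) e].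
have Ebd e : E e -> 0 <= e /\ e <= (M2 mu) ^+ 2 := fun h => eig_bounds mu e hmu h.
have hsup : has_sup E.
  split; first by exists a.
  by exists (M2 mu ^+ 2) => e /Ebd [].
have hinf : has_lbound E by exists 0 => e /Ebd [].
have bmax : b <= lambda_max mu := sup_upper_bound hsup Eb.
have amin : lambda_min mu <= a := ge_inf hinf Ea.
have dpos : 0 < lambda_max mu - lambda_min mu.
  by rewrite subr_gt0; apply: le_lt_trans amin _; apply: lt_le_trans ab bmax.
split => // nu hnu [A [Ap hA]].
have hnuA x : (\int[nu]_y ((dotv x y) ^+ 2)%:E = (A * sqnorm x)%:E)%E.
  by apply/le_anti/andP; split; [exact: (hA x).2 | exact: (hA x).1].
set del := lambda_max mu - lambda_min mu in dpos *.
set s := M2 mu + M2 nu.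
have s0 : 0 <= s by rewrite addr_ge0 ?M2_ge0.
have [s00|spos] := eqVneq s 0.
  by rewrite s00 mulr0 invr0 mulr0; exact: sqrtr_ge0.
have sp : 0 < s by rewrite lt_def spos s0.
set c := del / (4 * s).
have cp : 0 < c by rewrite /c divr_gt0 // mulr_gt0.
apply: W2_lb => //; first exact: ltW.
move=> g cpl.
have C0 : (0 <= \int[g]_z (sqdist z.1 z.2)%:E)%E.
  by apply: integral_ge0 => z _; rewrite lee_fin sqdist_ge0.
case Ce : (\int[g]_z (sqdist z.1 z.2)%:E)%E C0 => [r| |] //; try by move=> _; rewrite leey.
rewrite !lee_fin => r0.
set t := 2 * s / c.
have tp : 0 < t by rewrite /t divr_gt0 // mulr_gt0.
set Q := (M2 mu) ^+ 2 + (M2 nu) ^+ 2.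
set K := t / 2 * r + Q / t.
have near e : E e -> `|e - A| <= K by move=> He; exact: (eig_near mu nu g A e t r hmu hnu cpl hnuA tp Ce He).
have up : lambda_max mu <= A + K.
  apply: ge_sup; first by exists a.
  by move=> e /near; rewrite ler_norml => /andP [_ h]; lra.
have lo : A - K <= lambda_min mu.
  apply: lb_le_inf; first by exists a.
  by move=> e /near; rewrite ler_norml => /andP [h _]; lra.
have hd : del <= 2 * K by rewrite /del; lra.
have Qs : Q <= s ^+ 2.
  rewrite /Q /s sqrrD; have := mulr_ge0 (M2_ge0 mu) (M2_ge0 nu); lra.
have dc : del = 4 * s * c by rewrite /c mulrC divfK // mulf_neq0.
have tK : 2 * K = 2 * s * r / c + Q * c / s.
  by rewrite /K /t; field; rewrite spos gt_eqF.
have h1 : 4 * s * c <= 2 * s * r / c + Q * c / s by rewrite -dc -tK.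
have h2 : 4 * s * c * (c * s) <= (2 * s * r / c + Q * c / s) * (c * s).
  by rewrite ler_pM2r // mulr_gt0.
have h3 : (2 * s * r / c + Q * c / s) * (c * s) = 2 * s ^+ 2 * r + Q * c ^+ 2.
  by field; rewrite ?gt_eqF.
rewrite h3 in h2.
have h4 : Q * c ^+ 2 <= s ^+ 2 * c ^+ 2 by rewrite ler_pM2r // exprn_gt0.
have h5 : s ^+ 2 * (3 * c ^+ 2) <= s ^+ 2 * (2 * r).
  have -> : s ^+ 2 * (3 * c ^+ 2) = 4 * s * c * (c * s) - s ^+ 2 * c ^+ 2 by ring.
  lra.
rewrite ler_pM2l ?exprn_gt0 // in h5.
lra.
Qed.
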